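(* Let $\alpha\in\mathbb{F}_q^*$ and let $g(x)=\sum_{i=0}^ka_ix^i\in\mathbb{F}_q[x;\theta]$, with $a_k=1$ and $k\ge1$, be a right divisor of $x^n-\alpha$. Let $T_g$ be the $k\times k$ companion matrix of $g$, i.e. $(T_g)_{i,i+1}=1$ for $1\le i\le k-1$, the last row of $T_g$ is $(-a_0,-a_1,\dots,-a_{k-1})$, and all other entries are $0$. Let $P=(1,0,\dots,0)\in\mathbb{F}_q^k$ and $\tau=\Theta\circ T_g$. Then a linear code $\mathscr{C}\subseteq\mathbb{F}_q^n$ is the skew $\alpha$-cyclic $[n,n-k]$-code with generator polynomial $g(x)$ if and only if $\mathscr{C}$ is the code with parity check matrix $$[\,{}^tP,\ {}^t(P\tau),\ {}^t(P\tau^2),\ \dots,\ {}^t(P\tau^{n-1})\,].$$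
   Context: Let $\mathbb{F}_q$ be a finite field, $\theta$ a field automorphism of $\mathbb{F}_q$, and $\mathbb{F}_q[x;\theta]$ the skew polynomial ring with $xa=\theta(a)x$. A linear code $\mathscr{C}\subseteq\mathbb{F}_q^n$ is skew $\alpha$-cyclic if it is invariant under $(c_0,\dots,c_{n-1})\mapsto(\alpha\theta(c_{n-1}),\theta(c_0),\dots,\theta(c_{n-2}))$. Identifying $(a_0,\dots,a_{n-1})$ with the class of $\sum a_ix^i$ in the left module $\mathbb{F}_q[x;\theta]/\mathbb{F}_q[x;\theta](x^n-\alpha)$, the skew $\alpha$-cyclic code with generator polynomial $g$ (a monic right divisor of $x^n-\alpha$) is the left submodule generated by $g$; it has dimension $n-\deg g$. Vectors are row vectors, ${}^tv$ denotes the transpose, and $P\tau:=\Theta(P)T_g$ where $\Theta$ applies $\theta$ coordinatewise; $\tau^i$ is the $i$-fold iterate. The code with parity check matrix $H$ is $\{\vec c:\vec c\,{}^tH=0\}$. *)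

(* Defs.v *)
From HB Require Import structures.
From mathcomp Require Import all_boot all_order all_algebra.
Set Implicit Arguments. Unset Strict Implicit. Unset Printing Implicit Defensive.
Import GRing.Theory.
Local Open Scope ring_scope.

(* Skew polynomials over F with x a = theta(a) x, represented by their
   coefficient sequences (stored in {poly F}, used only as a coefficient
   container; the ring structure of {poly F} is NOT used for products). *)

Definition skew_mul (F : fieldType) (theta : F -> F) (f g : {poly F}) : {poly F} :=
  \sum_(i < size f) \sum_(j < size g)
     (f`_i * iter i theta g`_j) *: 'X^(i + j).

Definition skew_rdvd (F : fieldType) (theta : F -> F) (g h : {poly F}) : Prop :=
  exists q : {poly F}, h = skew_mul theta q g.

Definition poly_of_row (F : fieldType) (n : nat) (c : 'rV[F]_n) : {poly F} :=
  \sum_(i < n) c 0 i *: 'X^i.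

(* Membership in the skew alpha-cyclic code with generator polynomial g:
   the class of c in F[x;theta]/F[x;theta](x^n - alpha) lies in the left
   submodule generated by the class of g. *)
Definition in_skew_code (F : fieldType) (theta : F -> F) (n : nat) (alpha : F)
  (g : {poly F}) (c : 'rV[F]_n) : Prop :=
  exists f h : {poly F},
    poly_of_row c = skew_mul theta f g + skew_mul theta h ('X^n - alpha%:P).

Definition companion (F : fieldType) (k : nat) (g : {poly F}) : 'M[F]_k :=
  \matrix_(i < k, j < k)
     if (i : nat) == k.-1 then - g`_j else ((i.+1 == j)%N)%:R.

Definition Pvec (F : fieldType) (k : nat) : 'rV[F]_k :=
  \row_(j < k) ((j : nat) == 0%N)%:R.

Definition tau (F : fieldType) (theta : F -> F) (k : nat) (g : {poly F})
  (v : 'rV[F]_k) : 'rV[F]_k :=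
  map_mx theta v *m companion k g.

Definition parity_mx (F : fieldType) (theta : F -> F) (n k : nat) (g : {poly F})
  : 'M[F]_(k, n) :=
  \matrix_(r < k, i < n) (iter i (tau theta g) (@Pvec F k)) 0 r.

(* Main.v *)
Require Import Defs.
From HB Require Import structures.
From mathcomp Require Import all_boot all_order all_algebra zify.
Import GRing.Theory.
Local Open Scope ring_scope.
Set Implicit Arguments. Unset Strict Implicit.

Lemma sum_widen (F : fieldType) (V : zmodType) (p : {poly F}) (N : nat)
  (G : nat -> F -> V) : (size p <= N)%N -> (forall i, G i 0 = 0) ->
  \sum_(i < size p) G i p`_i = \sum_(i < N) G i p`_i.
Proof.
move=> hN hG; rewrite (big_ord_widen _ (fun i => G i p`_i) hN) big_mkcond.
apply: eq_bigr => i _; case: ifP => // /negbT; rewrite -leqNgt => hi.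
by rewrite nth_default // hG.
Qed.

Definition remv (F : fieldType) (k : nat) (w : nat -> 'rV[F]_k) (p : {poly F}) :=
  \sum_(i < size p) p`_i *: w i.

Lemma remvN (F : fieldType) k (w : nat -> 'rV[F]_k) (p : {poly F}) N : (size p <= N)%N ->
  remv w p = \sum_(i < N) p`_i *: w i :> 'rV[F]_k.
Proof. by move=> h; rewrite /remv (sum_widen (N := N) (G := fun i a => a *: w i)) // => i; rewrite scale0r. Qed.

Lemma remvD (F : fieldType) k (w : nat -> 'rV[F]_k) p q :
  remv w (p + q) = remv w p + remv w q.
Proof.
set N := maxn (size p) (size q).
rewrite (remvN _ (N := N)) ?(leq_trans (size_polyD _ _)) //.
rewrite (remvN _ (N := N)) ?leq_maxl // (remvN _ (N := N)) ?leq_maxr //.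
by rewrite -big_split /=; apply: eq_bigr => i _; rewrite coefD scalerDl.
Qed.

Lemma remv0 (F : fieldType) k (w : nat -> 'rV[F]_k) : remv w 0 = 0.
Proof. by rewrite /remv size_poly0 big_ord0. Qed.

Lemma remvNeg (F : fieldType) k (w : nat -> 'rV[F]_k) p : remv w (- p) = - remv w p.
Proof.
rewrite /remv size_polyN -sumrN; apply: eq_bigr => i _; by rewrite coefN scaleNr.
Qed.

Lemma remvB (F : fieldType) k (w : nat -> 'rV[F]_k) p q :
  remv w (p - q) = remv w p - remv w q.
Proof. by rewrite remvD remvNeg. Qed.

Lemma remv_sum (F : fieldType) k (w : nat -> 'rV[F]_k) (I : Type) (r : seq I) (P : pred I) (f : I -> {poly F}) :
  remv w (\sum_(i <- r | P i) f i) = \sum_(i <- r | P i) remv w (f i).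
Proof. exact: (big_morph _ (remvD w) (remv0 w)). Qed.

Lemma remvZX (F : fieldType) k (w : nat -> 'rV[F]_k) a m :
  remv w (a *: 'X^m) = a *: w m.
Proof.
rewrite (remvN _ (N := m.+1)); last by rewrite (leq_trans (size_scale_leq _ _)) // size_polyXn.
rewrite big_ord_recr /= big1 ?add0r => [|i _]; first by rewrite coefZ coefXn eqxx mulr1.
by rewrite coefZ coefXn (ltn_eqF (ltn_ord i)) mulr0 scale0r.
Qed.
Lemma tauD (F : fieldType) (theta : {rmorphism F -> F}) k (g : {poly F}) (u v : 'rV[F]_k) :
  tau theta g (u + v) = tau theta g u + tau theta g v.
Proof. by rewrite /tau map_mxD mulmxDl. Qed.

Lemma tau0 (F : fieldType) (theta : {rmorphism F -> F}) k (g : {poly F}) :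
  tau theta g (0 : 'rV[F]_k) = 0.
Proof. by rewrite /tau map_mx0 mul0mx. Qed.

Lemma tauZ (F : fieldType) (theta : {rmorphism F -> F}) k (g : {poly F}) a (u : 'rV[F]_k) :
  tau theta g (a *: u) = theta a *: tau theta g u.
Proof. by rewrite /tau map_mxZ scalemxAl. Qed.

Lemma iter_tau_sum (F : fieldType) (theta : {rmorphism F -> F}) k (g : {poly F}) i N
   (a : nat -> F) (v : nat -> 'rV[F]_k) :
  iter i (tau theta g) (\sum_(j < N) a j *: v j) =
  \sum_(j < N) iter i theta (a j) *: iter i (tau theta g) (v j).
Proof.
elim: i => [|i IH] //=; rewrite IH.
rewrite (big_morph _ (@tauD _ theta k g) (@tau0 _ theta k g)).
by apply: eq_bigr => j _; rewrite tauZ.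
Qed.

Lemma iter_tau0 (F : fieldType) (theta : {rmorphism F -> F}) k (g : {poly F}) i :
  iter i (tau theta g) (0 : 'rV[F]_k) = 0.
Proof. by elim: i => //= i ->; rewrite tau0. Qed.

Definition wv (F : fieldType) (theta : {rmorphism F -> F}) k (g : {poly F}) (i : nat) : 'rV[F]_k :=
  iter i (tau theta g) (@Pvec F k).

Lemma remv_skew (F : fieldType) (theta : {rmorphism F -> F}) k (g : {poly F}) (h p : {poly F}) :
  remv (wv theta k g) (skew_mul theta h p) =
  \sum_(i < size h) h`_i *: iter i (tau theta g) (remv (wv theta k g) p).
Proof.
rewrite /skew_mul remv_sum; apply: eq_bigr => i _.
rewrite remv_sum {2}/remv iter_tau_sum scaler_sumr; apply: eq_bigr => j _.
by rewrite remvZX scalerA /wv iterD.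
Qed.

Lemma remv_skew0 (F : fieldType) (theta : {rmorphism F -> F}) k (g : {poly F}) (h p : {poly F}) :
  remv (wv theta k g) p = 0 -> remv (wv theta k g) (skew_mul theta h p) = 0.
Proof.
move=> hp; rewrite remv_skew hp big1 // => i _; by rewrite iter_tau0 scaler0.
Qed.
Lemma wv_small (F : fieldType) (theta : {rmorphism F -> F}) k (g : {poly F}) j (hj : (j < k)%N) :
  wv theta k g j = delta_mx 0 (Ordinal hj).
Proof.
elim: j hj => [|j IH] hj.
  by apply/rowP => c; rewrite /wv /= !mxE.
rewrite /wv iterS -/(wv theta k g j) (IH (ltnW hj)) /tau map_delta_mx -rowE.
apply/rowP => c; rewrite !mxE /=.
have -> : (j == k.-1) = false by apply/negbTE; rewrite -ltn_predRL in hj; rewrite ltn_eqF.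
by rewrite eq_sym.
Qed.

Lemma wv_k (F : fieldType) (theta : {rmorphism F -> F}) k (g : {poly F}) : (0 < k)%N ->
  wv theta k g k = - \row_(c < k) g`_c.
Proof.
case: k => // k _.
rewrite /wv iterS -/(wv theta k.+1 g k) (wv_small _ _ (ltnSn k)) /tau map_delta_mx -rowE.
by apply/rowP => c; rewrite !mxE /= eqxx.
Qed.
Lemma remv_small (F : fieldType) (theta : {rmorphism F -> F}) k (g : {poly F}) (p : {poly F}) :
  (size p <= k)%N -> remv (wv theta k g) p = \row_(c < k) p`_c.
Proof.
move=> hp; rewrite (remvN _ hp) [RHS]row_sum_delta.
apply: eq_bigr => i _; by rewrite mxE (wv_small _ _ (ltn_ord i)).
Qed.

Lemma remv_small0 (F : fieldType) (theta : {rmorphism F -> F}) k (g : {poly F}) (p : {poly F}) :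
  (size p <= k)%N -> remv (wv theta k g) p = 0 -> p = 0.
Proof.
move=> hp; rewrite remv_small // => /rowP h; apply/polyP => i; rewrite coef0.
case: (ltnP i k) => hi; last by rewrite nth_default // (leq_trans hp).
by have := h (Ordinal hi); rewrite !mxE.
Qed.

Lemma remv_g (F : fieldType) (theta : {rmorphism F -> F}) k (g : {poly F}) :
  (0 < k)%N -> size g = k.+1 -> g \is monic -> remv (wv theta k g) g = 0.
Proof.
move=> hk hs hm.
rewrite (remvN _ (N := k.+1)) ?hs // big_ord_recr /= wv_k //.
have -> : g`_k = 1 by move/monicP: hm; rewrite /lead_coef hs.
rewrite scale1r.
have <- : remv (wv theta k g) (\sum_(i < k) g`_i *: 'X^i) = \sum_(i < k) g`_i *: wv theta k g i.
  by rewrite remv_sum; apply: eq_bigr => i _; rewrite remvZX.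
rewrite -poly_def remv_small ?size_poly //; apply/rowP => c; rewrite !mxE coef_poly ltn_ord.
by rewrite subrr.
Qed.
Lemma skew_mulN (F : fieldType) (theta : {rmorphism F -> F}) (f g : {poly F}) N :
  (size f <= N)%N ->
  skew_mul theta f g = \sum_(i < N) \sum_(j < size g) (f`_i * iter i theta g`_j) *: 'X^(i + j).
Proof.
move=> h; rewrite /skew_mul (sum_widen (N := N)
   (G := fun i a => \sum_(j < size g) (a * iter i theta g`_j) *: 'X^(i + j))) //.
by move=> i; rewrite big1 // => j _; rewrite mul0r scale0r.
Qed.

Lemma skew_mulDl (F : fieldType) (theta : {rmorphism F -> F}) (f1 f2 g : {poly F}) :
  skew_mul theta (f1 + f2) g = skew_mul theta f1 g + skew_mul theta f2 g.
Proof.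
set N := maxn (size f1) (size f2).
rewrite (skew_mulN _ _ (N := N)) ?(leq_trans (size_polyD _ _)) //.
rewrite (skew_mulN _ _ (N := N)) ?leq_maxl // (skew_mulN _ _ (N := N)) ?leq_maxr //.
rewrite -big_split /=; apply: eq_bigr => i _; rewrite -big_split /=.
by apply: eq_bigr => j _; rewrite coefD mulrDl scalerDl.
Qed.

Lemma skew_mul0 (F : fieldType) (theta : {rmorphism F -> F}) (g : {poly F}) :
  skew_mul theta 0 g = 0.
Proof. by rewrite /skew_mul size_poly0 big_ord0. Qed.

Lemma skew_mul_mono (F : fieldType) (theta : {rmorphism F -> F}) (g : {poly F}) b d :
  skew_mul theta (b *: 'X^d) g = 'X^d * \poly_(j < size g) (b * iter d theta g`_j).
Proof.
rewrite (skew_mulN _ _ (N := d.+1)); last first.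
  by rewrite (leq_trans (size_scale_leq _ _)) // size_polyXn.
rewrite big_ord_recr /= big1 ?add0r => [|i _]; last first.
  by rewrite big1 // => j _; rewrite coefZ coefXn (ltn_eqF (ltn_ord i)) mulr0 mul0r scale0r.
rewrite poly_def mulr_sumr; apply: eq_bigr => j _.
by rewrite coefZ coefXn eqxx mulr1 exprD scalerAr.
Qed.
Lemma iter_theta1 (F : fieldType) (theta : {rmorphism F -> F}) d : iter d theta 1 = 1.
Proof. by elim: d => //= d ->; rewrite rmorph1. Qed.

Lemma skew_div (F : fieldType) (theta : {rmorphism F -> F}) k (g : {poly F}) :
  size g = k.+1 -> g \is monic -> forall m (p : {poly F}), (size p <= m)%N ->
  exists f : {poly F}, (size (p - skew_mul theta f g)%R <= k)%N.
Proof.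
move=> hs hm; have gk : g`_k = 1 by move/monicP: hm; rewrite /lead_coef hs.
elim=> [|m IH] p hp.
  by exists 0; rewrite skew_mul0 subr0 (leq_trans hp).
case: (leqP m.+1 k) => hmk.
  by exists 0; rewrite skew_mul0 subr0 (leq_trans hp).
case: (leqP (size p) m) => hpm; first exact: IH.
have hsp : size p = m.+1 by apply/eqP; rewrite eqn_leq hp.
set d := (m - k)%N; set b := p`_m.
have hdec : (size (p - skew_mul theta (b *: 'X^d) g)%R <= m)%N.
  apply/leq_sizeP => j hj; rewrite coefB skew_mul_mono coefXnM.
  have hdj : (d <= j)%N by apply: leq_trans (leq_subr k m) hj.
  rewrite ltnNge hdj /= coef_poly hs.
  case: (ltngtP j m) hj => // [hjm _|->] .
    rewrite nth_default ?hsp //.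
    have -> : (j - d < k.+1)%N = false.
      apply/negbTE; rewrite -leqNgt /d; lia.
    by rewrite subrr.
  have -> : (m - d = k)%N by rewrite /d; lia.
  by rewrite ltnSn gk iter_theta1 mulr1 subrr.
have [f' hf'] := IH _ hdec.
exists (b *: 'X^d + f'); by rewrite skew_mulDl opprD addrA.
Qed.

Lemma parity_remv (F : fieldType) (theta : {rmorphism F -> F}) n k (g : {poly F}) (c : 'rV[F]_n) :
  c *m (@parity_mx F theta n k g)^T = remv (wv theta k g) (poly_of_row c).
Proof.
rewrite /poly_of_row remv_sum.
apply/rowP => r; rewrite !mxE summxE; apply: eq_bigr => i _.
by rewrite remvZX !mxE.
Qed.

Lemma key (F : fieldType) (theta : {rmorphism F -> F}) (n k : nat) (alpha : F) (g : {poly F}) :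
  (0 < k)%N -> size g = k.+1 -> g \is monic ->
  skew_rdvd theta g ('X^n - alpha%:P) ->
  forall c : 'rV[F]_n,
    @in_skew_code F theta n alpha g c <-> c *m (@parity_mx F theta n k g)^T = 0.
Proof.
move=> hk hs hm [q hq] c; rewrite parity_remv.
have hg := remv_g theta hk hs hm.
split.
  move=> [f [h ->]]; rewrite remvD (remv_skew0 _ hg) add0r.
  by apply: remv_skew0; rewrite hq; apply: remv_skew0.
move=> h0.
have [f hf] := skew_div theta hs hm (leqnn (size (poly_of_row c))).
have : remv (wv theta k g) (poly_of_row c - skew_mul theta f g) = 0.
  by rewrite remvB h0 (remv_skew0 _ hg) subr0.
move/(remv_small0 hf) => e.
exists f, 0; rewrite skew_mul0 addr0; apply/eqP; by rewrite -subr_eq0 e.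
Qed.

Unset Implicit Arguments.

Theorem mainTheorem6 (F : finFieldType) (theta : {rmorphism F -> F})
  (Htheta : bijective theta) (n k : nat) (alpha : F) (g : {poly F}) :
  alpha != 0 ->
  (0 < k)%N ->
  size g = k.+1 ->
  g \is monic ->
  skew_rdvd theta g ('X^n - alpha%:P) ->
  forall C : {vspace 'rV[F]_n},
    (forall c : 'rV[F]_n, c \in C <-> @in_skew_code F theta n alpha g c) <->
    (forall c : 'rV[F]_n, c \in C <-> c *m (@parity_mx F theta n k g)^T = 0).
Proof.
move=> _ hk hs hm hd C.
have K := key hk hs hm hd.
split=> h c; rewrite h; [exact: K c | exact: iff_sym (K c)].
Qed.
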